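(* Let $(G,O)$ be an equipped group and $s_1,s_2\in S(G,O)$. The following are equivalent: (i) $s_1$ and $s_2$ are $r$-equivalent; (ii) $s_1$ and $s_2$ are $l$-equivalent; (iii) $s_1$ and $s_2$ are equivalent.
   Context: An equipped group is a pair $(G,O)$, $G$ a group, $O\subset G$ a union of finitely many conjugacy classes, $1\notin O$. The factorization semigroup $S(G,O)$ is generated by symbols $x_g$, $g\in O$, subject to $x_{g_1}x_{g_2}=x_{g_2}x_{g_2^{-1}g_1g_2}=x_{g_1g_2g_1^{-1}}x_{g_1}$ ($g_1,g_2\in O$). Elements $s_1,s_2$ of a semigroup $S$ are $r$-equivalent (resp. $l$-equivalent) if there is $s_3\in S$ with $s_1s_3=s_2s_3$ (resp. $s_3s_1=s_3s_2$), and equivalent if there are $s_3,s_4\in S$ with $s_3s_1s_4=s_3s_2s_4$. *)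

(* Defs.v *)
From Stdlib Require Import List Relations.
Import ListNotations.

Record group := Group {
  gcar :> Type;
  gmul : gcar -> gcar -> gcar;
  gone : gcar;
  ginv : gcar -> gcar;
  gmulA : forall x y z, gmul x (gmul y z) = gmul (gmul x y) z;
  gmul1l : forall x, gmul gone x = x;
  gmulVl : forall x, gmul (ginv x) x = gone
}.
Arguments gmul {g}. Arguments gone {g}. Arguments ginv {g}.

Definition conjugate {G : group} (g g' : G) : Prop :=
  exists h : G, g' = gmul (gmul (ginv h) g) h.

Definition equipped (G : group) (O : G -> Prop) : Prop :=
  (exists reps : list G, forall g : G, O g <-> exists r, In r reps /\ conjugate r g)
  /\ ~ O gone.

(** Words representing elements of the factorization semigroup S(G,O):
    nonempty words in the letters x_g, g in O. *)
Definition fword {G : group} (O : G -> Prop) (w : list G) : Prop :=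
  w <> [] /\ Forall O w.

Inductive fstep {G : group} (O : G -> Prop) : list G -> list G -> Prop :=
| fstep_r (u v : list G) (a b : G) :
    Forall O u -> Forall O v -> O a -> O b ->
    fstep O (u ++ a :: b :: v) (u ++ b :: gmul (gmul (ginv b) a) b :: v)
| fstep_l (u v : list G) (a b : G) :
    Forall O u -> Forall O v -> O a -> O b ->
    fstep O (u ++ a :: b :: v) (u ++ gmul (gmul a b) (ginv a) :: a :: v).

(** Equality in S(G,O): the congruence generated by the relations. *)
Definition feq {G : group} (O : G -> Prop) : relation (list G) :=
  clos_refl_sym_trans (list G) (fstep O).

Definition r_equiv {G : group} (O : G -> Prop) (s1 s2 : list G) : Prop :=
  exists s3, fword O s3 /\ feq O (s1 ++ s3) (s2 ++ s3).

Definition l_equiv {G : group} (O : G -> Prop) (s1 s2 : list G) : Prop :=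
  exists s3, fword O s3 /\ feq O (s3 ++ s1) (s3 ++ s2).

Definition s_equiv {G : group} (O : G -> Prop) (s1 s2 : list G) : Prop :=
  exists s3 s4, fword O s3 /\ fword O s4 /\ feq O (s3 ++ s1 ++ s4) (s3 ++ s2 ++ s4).

(* Main.v *)
Require Import Defs.
From Stdlib Require Import List Relations.
Import ListNotations.

Section S.
Variable G : group.

Lemma mulrV (x : G) : gmul x (ginv x) = gone.
Proof.
  assert (Hy : gmul (gmul x (ginv x)) (gmul x (ginv x)) = gmul x (ginv x)).
  { rewrite <- gmulA, (gmulA _ (ginv x) x), gmulVl, gmul1l. reflexivity. }
  rewrite <- (gmul1l _ (gmul x (ginv x))).
  rewrite <- (gmulVl _ (gmul x (ginv x))) at 1.
  rewrite <- gmulA, Hy. apply gmulVl.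
Qed.

Lemma mulr1 (x : G) : gmul x gone = x.
Proof. rewrite <- (gmulVl _ x), gmulA, mulrV. apply gmul1l. Qed.

Lemma mul_lcancel (a x y : G) : gmul a x = gmul a y -> x = y.
Proof.
  intro H. rewrite <- (gmul1l _ x), <- (gmul1l _ y), <- (gmulVl _ a),
    <- !gmulA, H. reflexivity.
Qed.

Lemma mul_rcancel (a x y : G) : gmul x a = gmul y a -> x = y.
Proof.
  intro H. rewrite <- (mulr1 x), <- (mulr1 y), <- (mulrV a), !gmulA, H.
  reflexivity.
Qed.

Lemma ginv_mul (x y : G) : ginv (gmul x y) = gmul (ginv y) (ginv x).
Proof.
  apply (mul_lcancel (gmul x y)). rewrite (mulrV (gmul x y)).
  rewrite gmulA. rewrite <- (gmulA _ x y (ginv y)), (mulrV y), mulr1, mulrV.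
  reflexivity.
Qed.

Lemma ginv1 : ginv (gone : G) = gone.
Proof. rewrite <- (gmulVl _ gone) at 2. rewrite mulr1. reflexivity. Qed.

Definition cj (h a : G) : G := gmul (gmul (ginv h) a) h.

Lemma cj_comp (h' b a : G) : cj h' (cj b a) = cj (gmul b h') a.
Proof. unfold cj. rewrite ginv_mul, !gmulA. reflexivity. Qed.

Lemma cj1 (a : G) : cj gone a = a.
Proof. unfold cj. rewrite ginv1, gmul1l, mulr1. reflexivity. Qed.

Lemma cjK (h a : G) : cj h (cj (ginv h) a) = a.
Proof. rewrite cj_comp, gmulVl. apply cj1. Qed.

Lemma cjK' (h a : G) : cj (ginv h) (cj h a) = a.
Proof. rewrite cj_comp, mulrV. apply cj1. Qed.

Definition pi (w : list G) : G := fold_right gmul gone w.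

Lemma pi_app (u v : list G) : pi (u ++ v) = gmul (pi u) (pi v).
Proof.
  induction u as [|a u IH]; simpl. symmetry; apply gmul1l.
  unfold pi in *. rewrite IH. apply gmulA.
Qed.

Variable O : G -> Prop.
Hypothesis HO : equipped G O.

Lemma O_cj (h a : G) : O a -> O (cj h a).
Proof.
  destruct HO as [[reps Hr] _]. intro Ha.
  apply Hr in Ha. destruct Ha as [r [Hin [k Hk]]].
  apply Hr. exists r. split; [exact Hin|]. exists (gmul k h).
  subst a. fold (cj k r). rewrite cj_comp. reflexivity.
Qed.

Lemma Forall_cj (h : G) w : Forall O w -> Forall O (map (cj h) w).
Proof. intro H. apply Forall_map. eapply Forall_impl; [|exact H]. intros; apply O_cj; auto. Qed.

Lemma fstep_pi x y : fstep O x y -> pi x = pi y.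
Proof.
  intro H; destruct H; rewrite !pi_app; f_equal; simpl; fold (pi v).
  - rewrite !gmulA. rewrite (mulrV b), gmul1l. reflexivity.
  - rewrite !gmulA. rewrite <- (gmulA _ (gmul a b) (ginv a) a), gmulVl, mulr1.
    reflexivity.
Qed.

Lemma feq_pi x y : feq O x y -> pi x = pi y.
Proof.
  intro H; induction H.
  - apply fstep_pi; auto.
  - reflexivity.
  - auto.
  - congruence.
Qed.

Lemma feq_cong p q x y : Forall O p -> Forall O q -> feq O x y ->
  feq O (p ++ x ++ q) (p ++ y ++ q).
Proof.
  intros Hp Hq H; induction H.
  - apply rst_step. destruct H.
    + replace (p ++ (u ++ a :: b :: v) ++ q) with ((p ++ u) ++ a :: b :: (v ++ q))
        by (rewrite <- !app_assoc; reflexivity).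
      replace (p ++ (u ++ b :: gmul (gmul (ginv b) a) b :: v) ++ q)
        with ((p ++ u) ++ b :: gmul (gmul (ginv b) a) b :: (v ++ q))
        by (rewrite <- !app_assoc; reflexivity).
      constructor; auto; apply Forall_app; auto.
    + replace (p ++ (u ++ a :: b :: v) ++ q) with ((p ++ u) ++ a :: b :: (v ++ q))
        by (rewrite <- !app_assoc; reflexivity).
      replace (p ++ (u ++ gmul (gmul a b) (ginv a) :: a :: v) ++ q)
        with ((p ++ u) ++ gmul (gmul a b) (ginv a) :: a :: (v ++ q))
        by (rewrite <- !app_assoc; reflexivity).
      constructor; auto; apply Forall_app; auto.
  - apply rst_refl.
  - apply rst_sym; auto.
  - eapply rst_trans; eauto.
Qed.

Lemma feq_prefix p x y : Forall O p -> feq O x y -> feq O (p ++ x) (p ++ y).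
Proof.
  intros Hp H. pose proof (feq_cong p [] x y Hp (Forall_nil _) H).
  rewrite !app_nil_r in H0. exact H0.
Qed.

Lemma feq_suffix q x y : Forall O q -> feq O x y -> feq O (x ++ q) (y ++ q).
Proof. intros Hq H. exact (feq_cong [] q x y (Forall_nil _) Hq H). Qed.

Lemma swap1 (a : G) w : O a -> Forall O w -> feq O (a :: w) (w ++ [cj (pi w) a]).
Proof.
  revert a; induction w as [|b w IH]; intros a Ha Hw; simpl.
  - rewrite cj1. apply rst_refl.
  - inversion Hw; subst.
    eapply rst_trans.
    + apply rst_step. exact (fstep_r O [] w a b (Forall_nil _) H2 Ha H1).
    + simpl. change (feq O ([b] ++ (cj b a :: w)) ([b] ++ (w ++ [cj (gmul b (pi w)) a]))).
      apply feq_prefix; auto. rewrite <- cj_comp. apply IH; auto. apply O_cj; auto.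
Qed.

Lemma swap s w : Forall O s -> Forall O w -> feq O (s ++ w) (w ++ map (cj (pi w)) s).
Proof.
  induction s as [|a s IH]; intros Hs Hw; simpl.
  - rewrite app_nil_r. apply rst_refl.
  - inversion Hs; subst. apply rst_trans with (a :: w ++ map (cj (pi w)) s).
    + change (feq O ([a] ++ (s ++ w)) ([a] ++ (w ++ map (cj (pi w)) s))).
      apply feq_prefix; auto.
    + pose proof (feq_suffix (map (cj (pi w)) s) _ _ (Forall_cj _ _ H2) (swap1 a w H1 Hw)).
      rewrite <- app_assoc in H. exact H.
Qed.

Lemma map_cjK h s : map (cj h) (map (cj (ginv h)) s) = s.
Proof. rewrite map_map. induction s; simpl; auto. rewrite cjK, IHs; auto. Qed.

End S.

Theorem lemma3p1 (G : group) (O : G -> Prop) (HO : equipped G O)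
  (s1 s2 : list G) (h1 : fword O s1) (h2 : fword O s2) :
  (r_equiv O s1 s2 <-> l_equiv O s1 s2) /\ (l_equiv O s1 s2 <-> s_equiv O s1 s2).
Proof.
  destruct h1 as [n1 F1], h2 as [n2 F2].
  split; split.
  - intros [s3 [[n3 F3] H]].
    assert (Hc : pi G s1 = pi G s2).
    { pose proof (feq_pi G O _ _ H). rewrite !pi_app in H0. eapply mul_rcancel; eauto. }
    set (t := map (cj G (ginv (pi G s1))) s3).
    assert (Ft : Forall O t) by (apply Forall_cj; auto).
    exists t. split. { split; auto. unfold t. destruct s3; simpl; congruence. }
    eapply rst_trans. { apply swap; auto. }
    unfold t; rewrite map_cjK.
    eapply rst_trans. { exact H. }
    apply rst_sym. pose proof (swap G O HO t s2 Ft F2).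
    unfold t in H0 at 2. rewrite Hc, map_cjK in H0. exact H0.
  - intros [t [[nt Ft] H]].
    assert (Hc : pi G s1 = pi G s2).
    { pose proof (feq_pi G O _ _ H). rewrite !pi_app in H0. eapply mul_lcancel; eauto. }
    exists (map (cj G (pi G s1)) t). split.
    { split. destruct t; simpl; congruence. apply Forall_cj; auto. }
    eapply rst_trans. { apply rst_sym. apply swap; auto. }
    eapply rst_trans. { exact H. }
    rewrite Hc. apply swap; auto.
  - intros [s3 [[n3 F3] H]]. exists s3, s1. split; [split; auto|]. split; [split; auto|].
    rewrite !app_assoc. apply feq_suffix; auto.
  - intros [s3 [s4 [[n3 F3] [[n4 F4] H]]]].
    assert (Hc : pi G s1 = pi G s2).
    { pose proof (feq_pi G O _ _ H). rewrite !pi_app in H0.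
      apply mul_lcancel in H0. eapply mul_rcancel; eauto. }
    set (t := map (cj G (ginv (pi G s1))) s4).
    assert (Ft : Forall O t) by (apply Forall_cj; auto).
    assert (E1 : feq O (t ++ s1) (s1 ++ s4)).
    { pose proof (swap G O HO t s1 Ft F1). unfold t in H0 at 2. rewrite map_cjK in H0. exact H0. }
    assert (E2 : feq O (t ++ s2) (s2 ++ s4)).
    { pose proof (swap G O HO t s2 Ft F2). unfold t in H0 at 2. rewrite Hc, map_cjK in H0.
      exact H0. }
    exists (s3 ++ t). split.
    { split. destruct s3; simpl; congruence. apply Forall_app; auto. }
    rewrite <- !app_assoc.
    eapply rst_trans. { apply feq_prefix; [exact F3| exact E1]. }
    eapply rst_trans. { exact H. }
    apply rst_sym. apply feq_prefix; auto.
Qed.
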